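(* Every $2\times2\times2$ quaternion tensor $T$ satisfies $\mathrm{rank}(T)\le3$.
   Context: $\mathbb{H}$ denotes the real quaternions. An $n_1\times n_2\times n_3$ quaternion tensor is an array $T=(T_{ijk})$ with entries in $\mathbb{H}$, $1\le i\le n_1$, $1\le j\le n_2$, $1\le k\le n_3$; it is written $T=(A_1;\dots;A_{n_2})$ where the frontal slice $A_j$ is the $n_1\times n_3$ matrix $(T_{ijk})_{i,k}$. A nonzero tensor is simple if $T_{ijk}=a_ib_jc_k$ (quaternion product in this order) for some $\vec a\in\mathbb{H}^{n_1},\vec b\in\mathbb{H}^{n_2},\vec c\in\mathbb{H}^{n_3}$. The rank of $T$ is the least number of simple tensors summing to $T$ (the zero tensor has rank $0$). *)

(* Defs.v *)
From HB Require Import structures.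
From mathcomp Require Import all_boot all_order all_algebra.
From mathcomp Require Import reals.
Set Implicit Arguments. Unset Strict Implicit. Unset Printing Implicit Defensive.
Import Order.TTheory GRing.Theory Num.Theory.
Local Open Scope ring_scope.

Record quat (R : realType) := Quat { qre : R; qi : R; qj : R; qk : R }.

Definition qzero (R : realType) : quat R := Quat 0 0 0 0.

Definition qadd (R : realType) (p q : quat R) : quat R :=
  Quat (qre p + qre q) (qi p + qi q) (qj p + qj q) (qk p + qk q).

(* Hamilton product: i^2 = j^2 = k^2 = ijk = -1. *)
Definition qmul (R : realType) (p q : quat R) : quat R :=
  Quat (qre p * qre q - qi p * qi q - qj p * qj q - qk p * qk q)
       (qre p * qi q + qi p * qre q + qj p * qk q - qk p * qj q)
       (qre p * qj q - qi p * qk q + qj p * qre q + qk p * qi q)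
       (qre p * qk q + qi p * qj q - qj p * qi q + qk p * qre q).

Definition qtensor (R : realType) (n1 n2 n3 : nat) :=
  'I_n1 -> 'I_n2 -> 'I_n3 -> quat R.

Definition simple_qtensor (R : realType) (n1 n2 n3 : nat)
    (T : qtensor R n1 n2 n3) : Prop :=
  (exists i j k, T i j k <> qzero R) /\
  exists (a : 'I_n1 -> quat R) (b : 'I_n2 -> quat R) (c : 'I_n3 -> quat R),
    forall i j k, T i j k = qmul (qmul (a i) (b j)) (c k).

Definition qrank_le (R : realType) (n1 n2 n3 : nat)
    (T : qtensor R n1 n2 n3) (r : nat) : Prop :=
  exists (m : nat) (S : 'I_m -> qtensor R n1 n2 n3),
    (m <= r)%N /\ (forall t, simple_qtensor (S t)) /\
    forall i j k, T i j k = \big[@qadd R/qzero R]_(t < m) S t i j k.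

(* Main.v *)
Set Warnings "-all".
Require Import Defs.
From HB Require Import structures.
From mathcomp Require Import all_boot all_order all_algebra.
From mathcomp Require Import reals.
From mathcomp Require Import ring lra.
Set Implicit Arguments. Unset Strict Implicit. Unset Printing Implicit Defensive.
Import Order.TTheory GRing.Theory Num.Theory.
Local Open Scope ring_scope.

Section Q.
Variable R : realType.
Definition q2t (p : quat R) := (qre p, qi p, qj p, qk p).
Definition t2q (t : R * R * R * R) := let: (a, b, c, d) := t in Quat a b c d.
Lemma q2tK : cancel q2t t2q. Proof. by case. Qed.
HB.instance Definition _ := Choice.copy (quat R) (can_type q2tK).
Definition qopp (p : quat R) := Quat (- qre p) (- qi p) (- qj p) (- qk p).
Definition qone := Quat (1 : R) 0 0 0.
Lemma qaddA : associative (@qadd R).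
Proof. by move=> [? ? ? ?] [? ? ? ?] [? ? ? ?]; rewrite /qadd /=; congr Quat; ring. Qed.
Lemma qaddC : commutative (@qadd R).
Proof. by move=> [? ? ? ?] [? ? ? ?]; rewrite /qadd /=; congr Quat; ring. Qed.
Lemma qadd0 : left_id (qzero R) (@qadd R).
Proof. by move=> [? ? ? ?]; rewrite /qadd /=; congr Quat; ring. Qed.
Lemma qaddN : left_inverse (qzero R) qopp (@qadd R).
Proof. by move=> [? ? ? ?]; rewrite /qadd /=; congr Quat; ring. Qed.
HB.instance Definition _ := GRing.isZmodule.Build (quat R) qaddA qaddC qadd0 qaddN.
Lemma qmulA : associative (@qmul R).
Proof. by move=> [? ? ? ?] [? ? ? ?] [? ? ? ?]; rewrite /qmul /=; congr Quat; ring. Qed.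
Lemma qmul1 : left_id qone (@qmul R).
Proof. by move=> [? ? ? ?]; rewrite /qmul /=; congr Quat; ring. Qed.
Lemma qmulr1 : right_id qone (@qmul R).
Proof. by move=> [? ? ? ?]; rewrite /qmul /=; congr Quat; ring. Qed.
Lemma qmulDl : left_distributive (@qmul R) (@qadd R).
Proof. by move=> [? ? ? ?] [? ? ? ?] [? ? ? ?]; rewrite /qmul /= /qadd /=; congr Quat; ring. Qed.
Lemma qmulDr : right_distributive (@qmul R) (@qadd R).
Proof. by move=> [? ? ? ?] [? ? ? ?] [? ? ? ?]; rewrite /qmul /= /qadd /=; congr Quat; ring. Qed.
Lemma qone0 : qone != 0.
Proof. by apply/eqP => -[]; apply/eqP; rewrite oner_neq0. Qed.
HB.instance Definition _ := GRing.Zmodule_isNzRing.Build (quat R) qmulA qmul1 qmulr1 qmulDl qmulDr qone0.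

Definition qn (p : quat R) := qre p ^+ 2 + qi p ^+ 2 + qj p ^+ 2 + qk p ^+ 2.
Definition qinv (p : quat R) := Quat (qre p / qn p) (- qi p / qn p) (- qj p / qn p) (- qk p / qn p).
Lemma qn_neq0 p : p != 0 -> qn p != 0.
Proof.
case: p => a b c d H; apply/eqP => E; move: H; rewrite /qn /= in E.
have ha : a = 0 by nra. have hb : b = 0 by nra. have hc : c = 0 by nra. have hd : d = 0 by nra.
by rewrite ha hb hc hd eqxx.
Qed.
Lemma qmulV p : p != 0 -> p * qinv p = 1.
Proof.
move=> /qn_neq0; case: p => a b c d; rewrite /qn /= => H.
change (qmul (Quat a b c d) (qinv (Quat a b c d)) = qone).
by rewrite /qmul /qinv /qone /qn /=; congr Quat; field.
Qed.
Lemma qVmul p : p != 0 -> qinv p * p = 1.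
Proof.
move=> /qn_neq0; case: p => a b c d; rewrite /qn /= => H.
change (qmul (qinv (Quat a b c d)) (Quat a b c d) = qone).
by rewrite /qmul /qinv /qone /qn /=; congr Quat; field.
Qed.

Definition prodform n1 n2 n3 (S : qtensor R n1 n2 n3) :=
  exists a b c, forall i j k, S i j k = qmul (qmul (a i) (b j)) (c k).

Lemma prod_rank n1 n2 n3 m (T : qtensor R n1 n2 n3) (S : 'I_m -> qtensor R n1 n2 n3) :
  (forall t, prodform (S t)) ->
  (forall i j k, T i j k = \sum_(t < m) S t i j k) -> qrank_le T m.
Proof.
elim: m T S => [|m IH] T S HS HT.
  exists 0%N, S; split => //; split; first by case.
  by move=> i j k; rewrite HT.
have [m' [S' [Hm [HS' HT']]]] := IH (fun i j k => \sum_(t < m) S (lift ord0 t) i j k)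
   (fun t => S (lift ord0 t)) (fun t => HS _) (fun i j k => erefl).
case: (boolP [forall i, forall j, forall k, S ord0 i j k == 0]) => Hz.
  exists m', S'; split; first by apply: leqW.
  split => // i j k; rewrite -HT' HT big_ord_recl.
  by move/forallP: Hz => /(_ i)/forallP/(_ j)/forallP/(_ k)/eqP ->; rewrite add0r.
exists m'.+1, (fun t => if unlift ord0 t is Some t' then S' t' else S ord0).
split; first by [].
split.
  move=> t; case: (unlift ord0 t) => [t'|]; first exact: HS'.
  split; last exact: HS.
  move: Hz; rewrite negb_forall => /existsP [i]; rewrite negb_forall => /existsP [j].
  rewrite negb_forall => /existsP [k] /eqP H; by exists i, j, k.
move=> i j k; change (T i j k = \sum_(t < m'.+1)
   (if unlift ord0 t is Some t' then S' t' else S ord0) i j k).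
rewrite big_ord_recl unlift_none HT big_ord_recl; congr (_ + _).
rewrite HT'; change (\sum_(t < m') S' t i j k = \sum_(t < m') (if unlift ord0 (lift ord0 t) is Some t' then S' t' else S ord0) i j k).
by apply: eq_bigr => t _; rewrite liftK.
Qed.

Definition oth (x : 'I_2) : 'I_2 := if x == ord0 then ord_max else ord0.
Lemma othP (x y : 'I_2) : y != x -> y = oth x.
Proof.
by case: x => [[|[|x]] Hx]; case: y => [[|[|y]] Hy] //= _; apply: val_inj.
Qed.

Lemma pivot (M : 'I_2 -> 'I_2 -> quat R) j0 k0 j k : M j0 k0 != 0 ->
  (j == j0) || (k == k0) -> M j k0 * qinv (M j0 k0) * M j0 k = M j k.
Proof.
move=> Hp /orP [/eqP -> | /eqP ->].
  by rewrite qmulV // mul1r.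
by rewrite -mulrA qVmul // mulr1.
Qed.

Lemma key (T : qtensor R 2 2 2) i0 j0 k0 : T i0 j0 k0 != 0 -> qrank_le T 3.
Proof.
move=> Hp.
pose P j k := T i0 j k. pose Q j k := T (oth i0) j k.
pose lam : quat R := if Q j0 k0 == 0 then -1 else 0.
pose Q' j k := Q j k - lam * P j k.
have Hq : Q' j0 k0 != 0.
  rewrite /Q' /lam; case: ifP => [/eqP ->|/negbT H].
    by rewrite mulN1r opprK add0r.
  by rewrite mul0r subr0.
pose S1 : qtensor R 2 2 2 := fun i j k =>
  (if i == i0 then 1 else lam) * (P j k0 * qinv (P j0 k0)) * P j0 k.
pose S2 : qtensor R 2 2 2 := fun i j k =>
  (if i == i0 then 0 else 1) * (Q' j k0 * qinv (Q' j0 k0)) * Q' j0 k.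
pose a3 i := T i (oth j0) (oth k0) - S1 i (oth j0) (oth k0) - S2 i (oth j0) (oth k0).
pose S3 : qtensor R 2 2 2 := fun i j k =>
  a3 i * (if j == j0 then 0 else 1) * (if k == k0 then 0 else 1).
pose S (t : 'I_3) := if val t == 0%N then S1 else if val t == 1%N then S2 else S3.
apply: (@prod_rank _ _ _ _ _ S).
  move=> t; rewrite /S; case: ifP => _; first by do 3 eexists.
  by case: ifP => _; do 3 eexists.
move=> i j k; rewrite !big_ord_recl big_ord0 /S /=.
case: (boolP ((j == j0) || (k == k0))) => Hjk.
  have -> : S3 i j k = 0.
    by rewrite /S3; case/orP: Hjk => ->; rewrite ?mulr0 ?mul0r.
  rewrite addr0; case: (boolP (i == i0)) => Hi.
    rewrite /S1 /S2 Hi mul1r mul0r mul0r addr0 (eqP Hi).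
    by rewrite addr0 (pivot (M := P)).
  rewrite /S1 /S2 (negbTE Hi) mul1r -mulrA (pivot (M := P)) // (pivot (M := Q')) //.
  by rewrite /Q' addr0 addrC subrK (othP Hi).
move: Hjk; rewrite negb_or => /andP [/othP Hj /othP Hk].
have othN (x : 'I_2) : (oth x == x) = false.
  by case: x => [[|[|x]] Hx].
rewrite /S3 Hj Hk !othN !mulr1 addr0 /a3.
by rewrite -addrA -opprD addrA addrC subrK.
Qed.

End Q.

Theorem mainTheorem5 (R : realType) (T : qtensor R 2 2 2) : qrank_le T 3.
Proof.
case: (boolP [exists i, exists j, exists k, T i j k != 0]).
  case/existsP => i /existsP [j] /existsP [k]; exact: key.
rewrite negb_exists => /forallP H.
exists 0%N, (fun _ => T); split => //; split; first by case.
move=> i j k; rewrite big_ord0.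
by move: (H i); rewrite negb_exists => /forallP/(_ j); rewrite negb_exists => /forallP/(_ k); rewrite negbK => /eqP.
Qed.
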